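(* Let $Q_1,Q_2\in\{0,1\}^{3\times3}$ with $\mathrm{supp}(Q_1)=\{(1,2),(2,1),(3,3)\}$ and $\mathrm{supp}(Q_2)=\{(1,2),(2,3),(3,1)\}$. The class $\mathrm{Av}(\{Q_1,Q_2\})=\mathrm{Av}(Q_1)\cap\mathrm{Av}(Q_2)$ is bounded.
   Context: All matrices are binary; rows numbered top to bottom, columns left to right; $(i,j)$ is the entry in row $i$, column $j$; $\mathrm{supp}$ is the set of 1-entries; $(a,b]=\{a+1,\dots,b\}$. A pattern $P\in\{0,1\}^{k\times\ell}$ is an interval minor of $M\in\{0,1\}^{m\times n}$ if there are integers $0=r_0<\dots<r_k=m$ and $0=c_0<\dots<c_\ell=n$ such that for each 1-entry $(i,j)$ of $P$ the submatrix of $M$ on rows $(r_{i-1},r_i]$ and columns $(c_{j-1},c_j]$ contains a 1-entry; otherwise $M$ avoids $P$. For a set $\mathcal F$ of patterns, $\mathrm{Av}(\mathcal F)$ is the set of binary matrices avoiding every pattern of $\mathcal F$. $M\in\mathcal C$ is critical for $\mathcal C$ if changing any single 0-entry of $M$ into a 1-entry yields a matrix not in $\mathcal C$. A 0-run is a maximal set of consecutive 0-entries within a single row or a single column; the complexity of a line is the number of 0-runs in it. $\mathcal C$ is bounded if the supremum over all matrices critical for $\mathcal C$ of the maximum complexity of any of their lines (rows and columns) is finite. *)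

(* Defs.v *)
(* Binary matrices are 'M[bool]_(m, n); entries are 0-indexed. *)
From mathcomp Require Import all_boot matrix.
Set Implicit Arguments. Unset Strict Implicit. Unset Printing Implicit Defensive.

Definition interval_minor k l (P : 'M[bool]_(k, l)) m n (M : 'M[bool]_(m, n)) : Prop :=
  exists r c : nat -> nat,
    [/\ r 0 = 0, r k = m & (forall i, i < k -> r i < r i.+1)] /\
    [/\ c 0 = 0, c l = n & (forall j, j < l -> c j < c j.+1)] /\
    forall (i : 'I_k) (j : 'I_l), P i j ->
      exists (a : 'I_m) (b : 'I_n),
        [/\ r i <= a < r i.+1, c j <= b < c j.+1 & M a b].

Record pattern := Pattern { pk : nat; pl : nat; pmx : 'M[bool]_(pk, pl) }.

Definition mclass := forall m n, 'M[bool]_(m, n) -> Prop.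

Definition Av (F : seq pattern) : mclass :=
  fun m n M => forall i, i < size F ->
    ~ interval_minor (pmx (nth (Pattern (const_mx false : 'M[bool]_(0,0))) F i)) M.

Definition set1 m n (M : 'M[bool]_(m, n)) (i : 'I_m) (j : 'I_n) : 'M[bool]_(m, n) :=
  \matrix_(a, b) (if (a == i) && (b == j) then true else M a b).

Definition critical (C : mclass) m n (M : 'M[bool]_(m, n)) : Prop :=
  C m n M /\ forall i j, M i j = false -> ~ C m n (set1 M i j).

(* number of maximal runs of 0-entries (false) in a line *)
Fixpoint zruns_aux (prev_zero : bool) (s : seq bool) : nat :=
  match s with
  | [::] => 0
  | b :: s' => (if ~~ b && ~~ prev_zero then 1 else 0) + zruns_aux (~~ b) s'
  end.
Definition complexity (s : seq bool) : nat := zruns_aux false s.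

Definition row_line m n (M : 'M[bool]_(m, n)) (i : 'I_m) : seq bool :=
  [seq M i j | j <- enum 'I_n].
Definition col_line m n (M : 'M[bool]_(m, n)) (j : 'I_n) : seq bool :=
  [seq M i j | i <- enum 'I_m].

Definition bounded (C : mclass) : Prop :=
  exists B : nat, forall m n (M : 'M[bool]_(m, n)), critical C M ->
    (forall i, complexity (row_line M i) <= B) /\
    (forall j, complexity (col_line M j) <= B).

(* 3x3 patterns from their supports, given 1-indexed *)
Definition mx_of_supp (S : seq (nat * nat)) : 'M[bool]_(3, 3) :=
  \matrix_(i, j) ((i.+1, j.+1) \in S).

Definition Q1 : 'M[bool]_(3, 3) := mx_of_supp [:: (1, 2); (2, 1); (3, 3)].
Definition Q2 : 'M[bool]_(3, 3) := mx_of_supp [:: (1, 2); (2, 3); (3, 1)].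

(* Main.v *)
Require Import Defs.
From mathcomp Require Import all_boot matrix.
From mathcomp Require Import zify.
From Stdlib Require Import Classical.
Set Implicit Arguments. Unset Strict Implicit. Unset Printing Implicit Defensive.

Definition pat m n (M : 'M[bool]_(m,n)) : Prop :=
  exists (a b c : 'I_m) (x y z : 'I_n),
   [/\ (a < b)%N, (a < c)%N, (b : nat) != c, (x < y)%N & (y < z)%N] /\ [/\ M a y, M b x & M c z].

Lemma mkpat m n (M : 'M[bool]_(m,n)) (a b c : 'I_m) (x y z : 'I_n) :
  M a y -> M b x -> M c z -> a < b -> a < c -> (b:nat) != c ->
  (x < y < z) || (z < y < x) -> pat M.
Proof.
move=> Ha Hb Hc ab ac bc /orP[/andP[xy yz]|/andP[zy yx]].
  by exists a, b, c, x, y, z.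
by exists a, c, b, z, y, x; split => //; split => //; rewrite eq_sym.
Qed.

Lemma pat_IM m n (M : 'M[bool]_(m,n)) : pat M -> interval_minor Q1 M \/ interval_minor Q2 M.
Proof.
move=> [a [b [c [x [y [z [[ab ac bc xy yz] [May Mbx Mcz]]]]]]]].
have cm := ltn_ord c; have bm := ltn_ord b; have zn := ltn_ord z.
pose cf := fun k => if k == 0 then 0 else if k == 1 then x.+1 else if k == 2 then y.+1 else n.
have hcf : [/\ cf 0 = 0, cf 3 = n & (forall j, j < 3 -> cf j < cf j.+1)].
  split => //; case=> [|[|[|j]]] //= _; rewrite /cf /=; lia.
case: (ltngtP b c) => [bc'|cb|e]; last by rewrite e eqxx in bc.
- left. exists (fun k => if k == 0 then 0 else if k == 1 then a.+1 else if k == 2 then b.+1 else m), cf.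
  split; first by split => //; case=> [|[|[|i]]] //= _; lia.
  split => //.
  move=> [[|[|[|i]]] Hi] [[|[|[|j]]] Hj] //=; rewrite /Q1 /mx_of_supp mxE //= => _.
  + by exists a, y; split => //; rewrite /cf /=; lia.
  + by exists b, x; split => //; rewrite /cf /=; lia.
  + by exists c, z; split => //; rewrite /cf /=; lia.
- right. exists (fun k => if k == 0 then 0 else if k == 1 then a.+1 else if k == 2 then c.+1 else m), cf.
  split; first by split => //; case=> [|[|[|i]]] //= _; lia.
  split => //.
  move=> [[|[|[|i]]] Hi] [[|[|[|j]]] Hj] //=; rewrite /Q2 /mx_of_supp mxE //= => _.
  + by exists a, y; split => //; rewrite /cf /=; lia.
  + by exists c, z; split => //; rewrite /cf /=; lia.
  + by exists b, x; split => //; rewrite /cf /=; lia.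
Qed.

Lemma IM1_pat m n (M : 'M[bool]_(m,n)) : interval_minor Q1 M -> pat M.
Proof.
move=> [r [c [[r0 r3 rinc] [[c0 c3 cinc] H]]]].
have [a0 [b0 [/andP[ha1 ha2] /andP[hb1 hb2] M0]]] :=
  H (@Ordinal 3 0 isT) (@Ordinal 3 1 isT) ltac:(by rewrite /Q1 /mx_of_supp mxE).
have [a1 [b1 [/andP[ha1' ha2'] /andP[hb1' hb2'] M1]]] :=
  H (@Ordinal 3 1 isT) (@Ordinal 3 0 isT) ltac:(by rewrite /Q1 /mx_of_supp mxE).
have [a2 [b2 [/andP[ha1'' ha2''] /andP[hb1'' hb2''] M2]]] :=
  H (@Ordinal 3 2 isT) (@Ordinal 3 2 isT) ltac:(by rewrite /Q1 /mx_of_supp mxE).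
simpl in *.
by apply: (mkpat M0 M1 M2); lia.
Qed.

Lemma IM2_pat m n (M : 'M[bool]_(m,n)) : interval_minor Q2 M -> pat M.
Proof.
move=> [r [c [[r0 r3 rinc] [[c0 c3 cinc] H]]]].
have [a0 [b0 [/andP[ha1 ha2] /andP[hb1 hb2] M0]]] :=
  H (@Ordinal 3 0 isT) (@Ordinal 3 1 isT) ltac:(by rewrite /Q2 /mx_of_supp mxE).
have [a1 [b1 [/andP[ha1' ha2'] /andP[hb1' hb2'] M1]]] :=
  H (@Ordinal 3 1 isT) (@Ordinal 3 2 isT) ltac:(by rewrite /Q2 /mx_of_supp mxE).
have [a2 [b2 [/andP[ha1'' ha2''] /andP[hb1'' hb2''] M2]]] :=
  H (@Ordinal 3 2 isT) (@Ordinal 3 0 isT) ltac:(by rewrite /Q2 /mx_of_supp mxE).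
simpl in *.
have := rinc 0 isT; have := rinc 1 isT; have := rinc 2 isT.
have := cinc 0 isT; have := cinc 1 isT; have := cinc 2 isT => *.
by apply: (mkpat M0 M1 M2); lia.
Qed.

Lemma AvP m n (M : 'M[bool]_(m,n)) : Av [:: Pattern Q1; Pattern Q2] M <-> ~ pat M.
Proof.
split.
- move=> H /pat_IM [h|h]; [exact: (H 0 isT) | exact: (H 1 isT)].
- move=> np [|[|i]] //= _ h; apply: np; [exact: IM1_pat | exact: IM2_pat].
Qed.

Lemma set1E m n (M : 'M[bool]_(m,n)) i j u v :
  Defs.set1 M i j u v = (((u : nat) == i) && ((v : nat) == j)) || M u v.
Proof. by rewrite /Defs.set1 mxE; case: ifP. Qed.

Lemma flip m n (M : 'M[bool]_(m,n)) (i : 'I_m) (j : 'I_n) :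
  ~ pat M -> pat (Defs.set1 M i j) ->
  (exists (b c : 'I_m) (x z : 'I_n),
     [/\ i < b, i < c, (b:nat) != c, x < j < z & M b x && M c z])
  \/ (exists (a c : 'I_m) (y w : 'I_n),
     [/\ a < i, a < c, (c:nat) != i, (j < y < w) || (w < y < j) & M a y && M c w]).
Proof.
move=> np [a [b [c [x [y [z [[ab ac bc xy yz] [Ha Hb Hc]]]]]]]].
rewrite !set1E in Ha Hb Hc.
case/orP: Ha => [/andP[/eqP ai /eqP yj]|Ha];
case/orP: Hb => [/andP[/eqP bi /eqP xj]|Hb];
case/orP: Hc => [/andP[/eqP ci /eqP zj]|Hc]; try lia.
- by left; exists b, c, x, z; split; lia.
- by right; exists a, c, y, z; split; lia.
- by right; exists a, b, y, x; split; lia.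
- by case: np; exists a, b, c, x, y, z.
Qed.

Ltac slia := repeat match goal with
  | H : is_true (fun_of_matrix _ _ _) |- _ => clear H
  | H : fun_of_matrix _ _ _ = _ |- _ => clear H
  | H : forall _, _ |- _ => clear H
  | H : ~ _ |- _ => clear H
  end; lia.

Lemma row_key m n (M : 'M[bool]_(m,n)) (i : 'I_m) (p0 j0 p1 p2 j2 p3 : 'I_n) :
  ~ pat M -> (forall i j, M i j = false -> pat (Defs.set1 M i j)) ->
  p0 < j0 -> j0 < p1 -> p1 < p2 -> p2 < j2 -> j2 < p3 ->
  M i p0 -> M i j0 = false -> M i p1 -> M i p2 -> M i j2 = false -> M i p3 -> False.
Proof.
move=> np cr h1 h2 h3 h4 h5 M0 Mj0 M1 M2 Mj2 M3.
have lowerK : forall (j p q : 'I_n), p < j < q -> M i p -> M i q ->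
   (exists (a c : 'I_m) (y w : 'I_n), [/\ a < i, a < c, (c:nat) != i,
      (j < y < w) || (w < y < j) & M a y && M c w]) -> False.
  move=> j p q /andP[pj jq] Mp Mq [a [c [y [w [ai ac ci /orP[/andP[jy yw]|/andP[wy yj]] /andP[May Mcw]]]]]].
    by apply: np; apply: (mkpat May Mp Mcw); slia.
  by apply: np; apply: (mkpat May Mq Mcw); slia.
case: (flip np (cr _ _ Mj0)); last by apply: lowerK; [|exact M0|exact M1]; slia.
move=> [b0 [c0 [x0 [z0 [ib0 ic0 bc0 /andP[x0j z0j] /andP[Mb0 Mc0]]]]]].
case: (flip np (cr _ _ Mj2)); last by apply: lowerK; [|exact M2|exact M3]; slia.
move=> [b2 [c2 [x2 [z2 [ib2 ic2 bc2 /andP[x2j z2j] /andP[Mb2 Mc2]]]]]].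
case: (ltnP x2 p2) => hx2.
  by apply: np; apply: (mkpat M2 Mb2 Mc2); slia.
case: (eqVneq (b0 : nat) b2) => e.
  by apply: np; apply: (mkpat M1 Mb0 Mc2); slia.
by apply: np; apply: (mkpat M1 Mb0 Mb2); slia.
Qed.

Lemma col_key m n (M : 'M[bool]_(m,n)) (j : 'I_n) (p i q q' : 'I_m) :
  ~ pat M -> (forall i j, M i j = false -> pat (Defs.set1 M i j)) ->
  p < i -> i < q -> q < q' -> M p j -> M i j = false -> M q j -> M q' j -> False.
Proof.
move=> np cr h1 h2 h3 Mp Mi Mq Mq'.
case: (flip np (cr _ _ Mi)).
  move=> [b [c [x [z [ib ic bc /andP[xj zj] /andP[Mb Mc]]]]]].
  by apply: np; apply: (mkpat Mp Mb Mc); slia.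
move=> [a [c [y [w [ai ac ci hh /andP[May Mcw]]]]]].
case: (eqVneq (c : nat) q) => e.
  by apply: np; apply: (mkpat May Mq' Mcw); slia.
by apply: np; apply: (mkpat May Mq Mcw); slia.
Qed.

Fixpoint alt k : seq bool := if k is k'.+1 then [:: false, true & alt k'] else [:: false].

Lemma zruns_subseq s : forall k,
  (k < zruns_aux false s -> subseq (alt k) s) /\
  (k < zruns_aux true s -> subseq (true :: alt k) s).
Proof.
elim: s => [|b s IH] k /=; first by split.
case: b => /=; rewrite ?add0n.
- split => H.
    exact: (subseq_trans ((IH k).1 H) (subseq_cons _ _)).
  exact: ((IH k).1 H).
- split => H.
    case: k H => [|k] H /=; first exact: sub0seq.
    exact: ((IH k).2 H).
  exact: ((IH k).2 H).
Qed.

Lemma subseq_nth (p s : seq bool) : subseq p s -> exists f : nat -> nat,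
  (forall t, t < size p -> f t < size s /\ nth false s (f t) = nth false p t) /\
  (forall t, t.+1 < size p -> f t < f t.+1).
Proof.
elim: s p => [|y s IH] [|x p] //=.
- by move=> _; exists id; split => t.
- by move=> _; exists id; split => t.
- case: eqP => [->|nxy] H.
  + have [f [Hf1 Hf2]] := IH _ H.
    exists (fun t => if t is t'.+1 then (f t').+1 else 0); split.
    * case=> [|t] /= Ht; first by [].
      by have [? ?] := Hf1 t Ht.
    * case=> [|t] /= Ht; first by [].
      exact: Hf2.
  + have [f [Hf1 Hf2]] := IH _ H.
    exists (fun t => (f t).+1); split => t Ht /=.
      by have [? ?] := Hf1 t Ht.
    exact: Hf2.
Qed.

Lemma row_nth m n (M : 'M[bool]_(m,n)) i k (Hk : k < n) :
  nth false (row_line M i) k = M i (Ordinal Hk).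
Proof.
by rewrite /row_line (nth_map (Ordinal Hk)) ?size_enum_ord // (nth_ord_enum (Ordinal Hk) (Ordinal Hk)).
Qed.

Lemma col_nth m n (M : 'M[bool]_(m,n)) j k (Hk : k < m) :
  nth false (col_line M j) k = M (Ordinal Hk) j.
Proof.
by rewrite /col_line (nth_map (Ordinal Hk)) ?size_enum_ord // (nth_ord_enum (Ordinal Hk) (Ordinal Hk)).
Qed.

Theorem proposition4p3 :
  bounded (Av [:: Pattern Q1; Pattern Q2]).
Proof.
exists 4 => m n M [HC Hcr].
have np : ~ pat M by apply/AvP.
have cr : forall i j, M i j = false -> pat (Defs.set1 M i j).
  move=> i j Mij; apply: NNPP => npat; apply: (Hcr i j Mij); exact/AvP.
split.
- move=> i; rewrite leqNgt; apply/negP => /(fun H => (zruns_subseq _ 4).1 H) Hs.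
  have Hs' : subseq [:: true; false; true; true; false; true] (row_line M i).
    exact: (subseq_trans (isT : subseq [:: true; false; true; true; false; true] (alt 4)) Hs).
  have [f [Hf1 Hf2]] := subseq_nth Hs'.
  have sz : size (row_line M i) = n by rewrite size_map size_enum_ord.
  rewrite sz in Hf1.
  have [h0 e0] := Hf1 0 isT; rewrite (row_nth _ _ h0) in e0.
  have [h1 e1] := Hf1 1 isT; rewrite (row_nth _ _ h1) in e1.
  have [h2 e2] := Hf1 2 isT; rewrite (row_nth _ _ h2) in e2.
  have [h3 e3] := Hf1 3 isT; rewrite (row_nth _ _ h3) in e3.
  have [h4 e4] := Hf1 4 isT; rewrite (row_nth _ _ h4) in e4.
  have [h5 e5] := Hf1 5 isT; rewrite (row_nth _ _ h5) in e5.
  apply: (@row_key _ _ M i (Ordinal h0) (Ordinal h1) (Ordinal h2) (Ordinal h3) (Ordinal h4) (Ordinal h5) np cr _ _ _ _ _ _ e1 _ _ e4) => /=.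
  + exact: Hf2 0 isT.
  + exact: Hf2 1 isT.
  + exact: Hf2 2 isT.
  + exact: Hf2 3 isT.
  + exact: Hf2 4 isT.
  + by rewrite e0.
  + by rewrite e2.
  + by rewrite e3.
  + by rewrite e5.
- move=> j; rewrite leqNgt; apply/negP => /(fun H => (zruns_subseq _ 4).1 H) Hs.
  have Hs' : subseq [:: true; false; true; true] (col_line M j).
    exact: (subseq_trans (isT : subseq [:: true; false; true; true] (alt 4)) Hs).
  have [f [Hf1 Hf2]] := subseq_nth Hs'.
  have sz : size (col_line M j) = m by rewrite size_map size_enum_ord.
  rewrite sz in Hf1.
  have [h0 e0] := Hf1 0 isT; rewrite (col_nth _ _ h0) in e0.
  have [h1 e1] := Hf1 1 isT; rewrite (col_nth _ _ h1) in e1.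
  have [h2 e2] := Hf1 2 isT; rewrite (col_nth _ _ h2) in e2.
  have [h3 e3] := Hf1 3 isT; rewrite (col_nth _ _ h3) in e3.
  apply: (@col_key _ _ M j (Ordinal h0) (Ordinal h1) (Ordinal h2) (Ordinal h3) np cr _ _ _ _ e1) => /=.
  + exact: Hf2 0 isT.
  + exact: Hf2 1 isT.
  + exact: Hf2 2 isT.
  + by rewrite e0.
  + by rewrite e2.
  + by rewrite e3.
Qed.
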